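(* Let $U$ be a nonempty finite set, $R\subseteq U\times U$ serial and transitive, and let $h_1$ be the height function of the closed-set lattice $\mathcal{L}(M(Reg(U,R)))$. Then for every $X\in Reg(U,R)$ (which is a closed set of $M(Reg(U,R))$), $h(X)=h_1(X)$.
   Context: $R_s(x)=\{y\in U\mid xRy\}$; $\underline{R}(X)=\{x\mid R_s(x)\subseteq X\}$, $\overline{R}(X)=\{x\mid R_s(x)\cap X\neq\emptyset\}$; $X$ is regular if $X=\underline{R}(\overline{R}(X))$, and $Reg(U,R)$ is the lattice of regular sets under inclusion, with least element $\emptyset$. $h(A)$ is the length of a maximal chain in $[\emptyset,A]$ within $Reg(U,R)$. $M(Reg(U,R))$ is the matroid on $U$ with independent sets $\{X\subseteq U\mid h(Y)\ge|X\cap Y|\ \forall Y\in Reg(U,R)\}$, rank function $r(X)=\max\{|I|\mid I\subseteq X \text{ independent}\}$, closure operator $cl(X)=\{u\in U\mid r(X\cup\{u\})=r(X)\}$; a set $X$ is closed if $cl(X)=X$. $\mathcal{L}(M)$ is the lattice of closed sets of $M$ under inclusion (join $cl(X\cup Y)$, meet $X\cap Y$), whose least element is $cl(\emptyset)$; $h_1(X)$ is the length of a maximal chain from the least element to $X$ in $\mathcal{L}(M)$. *)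

(* Defs.v *)
From mathcomp Require Import all_boot.
Set Implicit Arguments. Unset Strict Implicit. Unset Printing Implicit Defensive.

Section RoughSets.
Variable U : finType.
Variable R : rel U.

Definition Rs (x : U) : {set U} := [set y | R x y].

Definition lowerR (X : {set U}) : {set U} := [set x | Rs x \subset X].
Definition upperR (X : {set U}) : {set U} := [set x | Rs x :&: X != set0].

Definition regular (X : {set U}) : bool := X == lowerR (upperR X).

(* A chain of length n from a to b inside the family P: a strictly increasing
   sequence a = t_0 < t_1 < ... < t_n = b with t_1, ..., t_n in P. *)
Definition chain_in (P : pred {set U}) (a b : {set U}) (n : nat) : bool :=
  [exists t : n.-tuple {set U},
     [&& path (fun A B : {set U} => A \proper B) a t, all P t & last a t == b]].

(* Length of a maximal (= longest) chain from a to b in the family P.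
   Chain lengths are bounded by #|U| since the sets strictly increase. *)
Definition height (P : pred {set U}) (a b : {set U}) : nat :=
  \max_(n < #|U|.+1 | chain_in P a b n) n.

(* h(A): height of A in Reg(U,R), whose least element is the empty set *)
Definition h (A : {set U}) : nat := height regular set0 A.

Definition indep (X : {set U}) : bool :=
  [forall Y : {set U}, regular Y ==> (#|X :&: Y| <= h Y)].

Definition rk (X : {set U}) : nat :=
  \max_(I : {set U} | (I \subset X) && indep I) #|I|.

Definition cl (X : {set U}) : {set U} := [set u | rk (u |: X) == rk X].

Definition closedM (X : {set U}) : bool := cl X == X.

(* h_1: height in the lattice of closed sets L(M), least element cl(set0) *)
Definition h1 (X : {set U}) : nat := height closedM (cl set0) X.

End RoughSets.

(* Main.v *)
Require Import Defs.
From mathcomp Require Import all_boot.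
Set Implicit Arguments. Unset Strict Implicit. Unset Printing Implicit Defensive.

Definition final (U : finType) (R : rel U) (c : U) := forall y, R c y -> R y c.

Lemma final_ex (U : finType) (R : rel U)
  (Hserial : forall x : U, exists y : U, R x y) (Htrans : transitive R) x :
  exists2 c, final R c & R x c.
Proof.
have [y0 Hy0] := Hserial x.
case: (arg_minnP (fun y => #|Rs R y|) Hy0) => y Hxy Hmin.
have [z Hyz] := Hserial y.
have Hxz : R x z by apply: Htrans Hyz.
have subRs : forall a b, R a b -> Rs R b \subset Rs R a.
  by move=> a b Hab; apply/subsetP=> w; rewrite !inE => Hbw; apply: Htrans Hbw.
have eqRs : forall w, R y w -> Rs R w = Rs R y.
  move=> w Hyw; apply/eqP; rewrite eqEcard subRs //=.
  by apply: Hmin; apply: Htrans Hyw.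
exists z => //.
move=> w Hzw.
have Hyw : R y w by apply: Htrans Hzw.
have : z \in Rs R w by rewrite (eqRs w Hyw) inE.
by rewrite inE.
Qed.

Lemma final_refl (U : finType) (R : rel U)
  (Hserial : forall x : U, exists y : U, R x y) (Htrans : transitive R) c :
  final R c -> R c c.
Proof. move=> Hc; have [y Hy] := Hserial c; exact: Htrans Hy (Hc _ Hy). Qed.

Lemma lowerupperP (U : finType) (R : rel U)
  (Hserial : forall x : U, exists y : U, R x y) (Htrans : transitive R) (X : {set U}) x :
  reflect (forall c, final R c -> R x c -> exists2 z, R c z & z \in X)
          (x \in lowerR R (upperR R X)).
Proof.
have upP : forall y, reflect (exists2 z, R y z & z \in X) (y \in upperR R X).
  move=> y; rewrite /upperR in_set.
  apply: (iffP (set0Pn _)) => [[z]|[z Hyz HzX]].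
    by rewrite !inE => /andP[]; exists z.
  by exists z; rewrite !inE Hyz.
rewrite inE; apply: (iffP subsetP) => [H c Hc Hxc|H y].
  by apply/upP; apply: H; rewrite inE.
rewrite inE => Hxy.
have [c Hc Hyc] := final_ex Hserial Htrans y.
have [z Hcz HzX] := H c Hc (Htrans _ _ _ Hxy Hyc).
by apply/upP; exists z => //; apply: Htrans Hcz.
Qed.

Lemma path_card (U : finType) (t : seq {set U}) (a : {set U}) :
  path (fun A B : {set U} => A \proper B) a t -> #|a| + size t <= #|last a t|.
Proof.
elim: t a => [|y t IH] a /=; first by rewrite addn0.
move=> /andP[Hay Hp]; have := IH y Hp; have := proper_card Hay.
rewrite addnS; move=> H1 H2; apply: leq_trans H2; rewrite ltn_add2r //.
Qed.

Lemma chain_le (U : finType) (P : pred {set U}) a b n :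
  chain_in P a b n -> n <= #|b|.
Proof.
case/existsP=> t /and3P[Hp _ /eqP Hl].
have := path_card Hp; rewrite size_tuple Hl => H.
by apply: leq_trans H; apply: leq_addl.
Qed.

Lemma height_ge (U : finType) (P : pred {set U}) a b n :
  chain_in P a b n -> n <= height P a b.
Proof.
move=> Hc.
have Hn : n < #|U|.+1 by rewrite ltnS; apply: leq_trans (chain_le Hc) (max_card _).
exact: (@leq_bigmax_cond _ (fun i : 'I_#|U|.+1 => chain_in P a b i) (fun i => nat_of_ord i) (Ordinal Hn)).
Qed.

Lemma height_le (U : finType) (P : pred {set U}) a b m :
  (forall n, chain_in P a b n -> n <= m) -> height P a b <= m.
Proof. by move=> H; apply/bigmax_leqP => i; apply: H. Qed.

Lemma height_chain (U : finType) (P : pred {set U}) a b n :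
  chain_in P a b n -> chain_in P a b (height P a b).
Proof.
move=> Hc.
have Hn : n < #|U|.+1 by rewrite ltnS; apply: leq_trans (chain_le Hc) (max_card _).
rewrite /height (bigmax_eq_arg (Ordinal Hn)) //.
by case: arg_maxnP.
Qed.

Lemma chain_ext (U : finType) (P : pred {set U}) a b (c : {set U}) n :
  chain_in P a b n -> b \proper c -> P c -> chain_in P a c n.+1.
Proof.
case/existsP=> t /and3P[Hp Ha /eqP Hl] Hbc Pc.
apply/existsP; exists [tuple of rcons t c].
by rewrite /= rcons_path Hp Hl Hbc all_rcons Pc Ha last_rcons eqxx.
Qed.

Lemma indep0 (U : finType) (R : rel U) : indep R set0.
Proof. by apply/forallP => Y; apply/implyP => _; rewrite set0I cards0. Qed.

Lemma rk_mono (U : finType) (R : rel U) (A B : {set U}) :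
  A \subset B -> rk R A <= rk R B.
Proof.
move=> AB; apply/bigmax_leqP => I /andP[IA Hi].
by apply: (@leq_bigmax_cond _ (fun J : {set U} => (J \subset B) && indep R J) (fun J : {set U} => #|J|)); rewrite Hi (subset_trans IA AB).
Qed.

Lemma rk_attained (U : finType) (R : rel U) (X : {set U}) :
  exists2 I : {set U}, (I \subset X) && indep R I & #|I| = rk R X.
Proof.
rewrite /rk (bigmax_eq_arg set0); last by rewrite sub0set indep0.
case: arg_maxnP; first by rewrite sub0set indep0.
by move=> I HI _; exists I.
Qed.

Lemma rk_le_h (U : finType) (R : rel U) (X : {set U}) :
  regular R X -> rk R X <= h R X.
Proof.
move=> rX; apply/bigmax_leqP => I /andP[IX /forallP Hi].
have := implyP (Hi X) rX; by rewrite (setIidPl IX).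
Qed.

Lemma closed_proper (U : finType) (R : rel U) (A B : {set U}) :
  closedM R A -> A \proper B -> rk R A < rk R B.
Proof.
move=> /eqP cA /properP[AB [u uB uA]].
rewrite ltn_neqAle rk_mono // andbT; apply/negP => /eqP E.
have H1 : rk R A <= rk R (u |: A) by apply: rk_mono; apply: subsetUr.
have H2 : rk R (u |: A) <= rk R B by apply: rk_mono; rewrite subUset sub1set uB AB.
have : u \in cl R A by rewrite inE eqn_leq H1 andbT E H2.
by rewrite cA (negbTE uA).
Qed.

Lemma rank_path (U : finType) (R : rel U) (t : seq {set U}) (a : {set U}) :
  closedM R a -> path (fun A B : {set U} => A \proper B) a t -> all (closedM R) t ->
  rk R a + size t <= rk R (last a t).
Proof.
elim: t a => [|y t IH] a /=; first by rewrite addn0.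
move=> ca /andP[Hay Hp] /andP[cy Ht]; have := IH y cy Hp Ht.
have := closed_proper ca Hay.
rewrite addnS; move=> H1 H2; apply: leq_trans H2; rewrite ltn_add2r //.
Qed.

Lemma regP (U : finType) (R : rel U)
  (Hserial : forall x : U, exists y : U, R x y) (Htrans : transitive R) (X : {set U}) x :
  regular R X ->
  reflect (forall c, final R c -> R x c -> exists2 z, R c z & z \in X) (x \in X).
Proof. by rewrite /regular => /eqP HX; have := lowerupperP Hserial Htrans X x; rewrite -HX. Qed.

Lemma regular0 (U : finType) (R : rel U)
  (Hserial : forall x : U, exists y : U, R x y) (Htrans : transitive R) :
  regular R set0.
Proof.
rewrite /regular eq_sym; apply/eqP/setP => x; rewrite in_set0.
apply/negbTE/(lowerupperP Hserial Htrans) => H.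
have [c Hc Hxc] := final_ex Hserial Htrans x.
by have [z _] := H c Hc Hxc; rewrite inE.
Qed.

Lemma regularI (U : finType) (R : rel U)
  (Hserial : forall x : U, exists y : U, R x y) (Htrans : transitive R) (X Z : {set U}) :
  regular R X -> regular R Z -> regular R (X :&: Z).
Proof.
move=> rX rZ; rewrite /regular; apply/eqP/setP => x.
apply/idP/(lowerupperP Hserial Htrans).
  rewrite inE => /andP[xX xZ] c Hc Hxc.
  exists c; first exact: final_refl.
  rewrite inE; apply/andP; split.
    apply/(regP Hserial Htrans _ rX) => c' Hc' Hcc'.
    exact: (regP Hserial Htrans _ rX xX) c' Hc' (Htrans _ _ _ Hxc Hcc').
  apply/(regP Hserial Htrans _ rZ) => c' Hc' Hcc'.
  exact: (regP Hserial Htrans _ rZ xZ) c' Hc' (Htrans _ _ _ Hxc Hcc').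
move=> H; rewrite inE; apply/andP; split.
  apply/(regP Hserial Htrans _ rX) => c Hc Hxc.
  by have [z Hcz] := H c Hc Hxc; rewrite inE => /andP[? _]; exists z.
apply/(regP Hserial Htrans _ rZ) => c Hc Hxc.
by have [z Hcz] := H c Hc Hxc; rewrite inE => /andP[_ ?]; exists z.
Qed.

Lemma chain_reg0 (U : finType) (R : rel U) (W : {set U}) :
  regular R W -> exists n, chain_in (regular R) set0 W n.
Proof.
move=> rW; case: (eqVneq W set0) => [->|Wn0].
  by exists 0; apply/existsP; exists [tuple] => /=.
exists 1; apply/existsP; exists [tuple W] => /=.
by rewrite rW eqxx proper0 Wn0.
Qed.

Lemma h_proper (U : finType) (R : rel U) (W Y : {set U}) :
  regular R W -> regular R Y -> W \proper Y -> h R W < h R Y.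
Proof.
move=> rW rY WY; have [n Hn] := chain_reg0 rW.
exact: height_ge (chain_ext (height_chain Hn) WY rY).
Qed.

Lemma reg_closed (U : finType) (R : rel U)
  (Hserial : forall x : U, exists y : U, R x y) (Htrans : transitive R) (X : {set U}) :
  regular R X -> closedM R X.
Proof.
move=> rX; apply/eqP/setP => u; rewrite inE.
case uX: (u \in X).
  rewrite (setUidPr _) ?eqxx // sub1set uX //.
apply/negbTE; rewrite neq_ltn; apply/orP; right.
have [I /andP[IX iI] EI] := rk_attained R X.
have uI : u \notin I by apply: contraFN uX; apply: (subsetP IX).
have iuI : indep R (u |: I).
  apply/forallP => Y; apply/implyP => rY.
  have [uY|uY] := boolP (u \in Y).
    have rXY := regularI Hserial Htrans rX rY.
    have Hp : X :&: Y \proper Y.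
      by apply/properP; split; [apply: subsetIr | exists u => //; rewrite inE uX].
    have := h_proper rXY rY Hp.
    have := implyP (forallP iI (X :&: Y)) rXY.
    rewrite setIA (setIidPl IX) => H1 H2.
    apply: leq_trans (_ : #|u |: (I :&: Y)| <= _).
      by apply: subset_leq_card; apply/subsetP => w; rewrite !inE => /andP[/orP[->|->] ->]; rewrite ?orbT.
    rewrite cardsU1; apply: leq_trans (leq_add (leq_b1 _) (leqnn _)) _.
    by rewrite add1n; apply: leq_trans H2; rewrite ltnS.
  have -> : (u |: I) :&: Y = I :&: Y.
    apply/setP=> w; rewrite !inE; case: eqP => // ->.
    by rewrite (negbTE uY) !andbF.
  exact: implyP (forallP iI Y) rY.
rewrite -EI; apply: leq_trans (_ : #|u |: I| <= _); first by rewrite cardsU1 uI.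
apply: (@leq_bigmax_cond _ (fun J : {set U} => (J \subset u |: X) && indep R J) (fun J : {set U} => #|J|)).
by rewrite iuI andbT; apply: setUS.
Qed.

Theorem mainTheorem10 (U : finType) (R : rel U)
  (HU : 0 < #|U|)
  (Hserial : forall x : U, exists y : U, R x y)
  (Htrans : transitive R) :
  forall X : {set U}, regular R X ->
    closedM R X /\ h R X = h1 R X.
Proof.
move=> X rX; split; first exact: reg_closed.
have c0 : closedM R set0 by apply: reg_closed => //; apply: regular0.
have cl0 : cl R set0 = set0 by apply/eqP.
apply/eqP; rewrite eqn_leq; apply/andP; split.
  apply: height_le => n /existsP[t /and3P[Hp Ha Hl]].
  apply: height_ge; apply/existsP; exists t; rewrite cl0 Hp Hl andbT /=.
  by apply: sub_all Ha => Y; apply: reg_closed.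
apply: leq_trans (rk_le_h rX).
apply: height_le => n /existsP[t /and3P[Hp Ha /eqP Hl]].
rewrite cl0 in Hp Hl.
have := rank_path c0 Hp Ha; rewrite size_tuple Hl.
by apply: leq_trans; apply: leq_addl.
Qed.
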